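(* Let $\hat a=a_1+a_2\varepsilon$, $\hat b=b_1+b_2\varepsilon\in\mathbb{DC}$ with $a_1,b_1\notin\mathbb R$, and suppose $\hat q=q_1+q_2 j+(q_3+q_4 j)\varepsilon\in\hat{\mathbb U}$ satisfies $\hat q^*\hat a\hat q=\hat b$. Then either $$\hat a=\hat b\quad\text{and}\quad\{\hat q\in\hat{\mathbb U}:\hat a\hat q=\hat q\hat b\}=\mathbb{DC}\cap\hat{\mathbb U},$$ or $$\hat a=\overline{\hat b}\quad\text{and}\quad\{\hat q\in\hat{\mathbb U}:\hat a\hat q=\hat q\hat b\}=\{\hat q j:\hat q\in\mathbb{DC}\cap\hat{\mathbb U}\}.$$
   Context: $\mathbb{Q}$ denotes the real quaternions with units $i,j,k$; complex numbers are identified with quaternions $a+bi$ (so $jz=\bar z j$). $\varepsilon$ satisfies $\varepsilon\ne0$, $\varepsilon^2=0$ and commutes with quaternions. $\mathbb{DC}$ is the set of dual complex numbers $a+b\varepsilon$, $a,b\in\mathbb C$, and $\overline{a+b\varepsilon}=\bar a+\bar b\varepsilon$. A dual quaternion is $\tilde p_{st}+\tilde p_{\mathcal I}\varepsilon$ with quaternions $\tilde p_{st},\tilde p_{\mathcal I}$, conjugate $\hat p^*=\tilde p_{st}^*+\tilde p_{\mathcal I}^*\varepsilon$. $\hat{\mathbb U}$ is the set of unit dual quaternions, i.e. those $\hat p$ with $|\hat p|=1$, where $|\hat p|=|\tilde p_{st}|+\frac{\mathrm{sc}(\tilde p_{st}^*\tilde p_{\mathcal I})}{|\tilde p_{st}|}\varepsilon$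 for $\tilde p_{st}\ne0$, $\mathrm{sc}(\tilde p)=\frac12(\tilde p+\tilde p^* )$; equivalently $\hat p^*\hat p=\hat p\hat p^*=1$. *)

(* Defs.v *)
From Stdlib Require Import Reals.
Open Scope R_scope.

Record quat := Quat { qr : R; qi : R; qj : R; qk : R }.

Definition qadd (p q : quat) : quat :=
  Quat (qr p + qr q) (qi p + qi q) (qj p + qj q) (qk p + qk q).

Definition qmul (p q : quat) : quat :=
  Quat (qr p * qr q - qi p * qi q - qj p * qj q - qk p * qk q)
       (qr p * qi q + qi p * qr q + qj p * qk q - qk p * qj q)
       (qr p * qj q - qi p * qk q + qj p * qr q + qk p * qi q)
       (qr p * qk q + qi p * qj q - qj p * qi q + qk p * qr q).

Definition qconj (p : quat) : quat := Quat (qr p) (- qi p) (- qj p) (- qk p).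

Definition qzero : quat := Quat 0 0 0 0.
Definition qone : quat := Quat 1 0 0 0.
Definition qunit_j : quat := Quat 0 0 1 0.

Definition is_complex (x : quat) : Prop := qj x = 0 /\ qk x = 0.

Definition cconj (x : quat) : quat := Quat (qr x) (- qi x) (qj x) (qk x).

(* Dual quaternion  p_st + p_I eps *)
Record dquat := DQ { dst : quat; dI : quat }.

Definition dmul (p q : dquat) : dquat :=
  DQ (qmul (dst p) (dst q)) (qadd (qmul (dst p) (dI q)) (qmul (dI p) (dst q))).

Definition dconj (p : dquat) : dquat := DQ (qconj (dst p)) (qconj (dI p)).

Definition done : dquat := DQ qone qzero.
Definition dj : dquat := DQ qunit_j qzero.

Definition is_DC (p : dquat) : Prop := is_complex (dst p) /\ is_complex (dI p).

Definition dcbar (p : dquat) : dquat := DQ (cconj (dst p)) (cconj (dI p)).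

Definition is_unit_dq (p : dquat) : Prop := dmul (dconj p) p = done /\ dmul p (dconj p) = done.

(* Main.v *)
Require Import Defs.
From Stdlib Require Import Reals Lra Psatz.
Open Scope R_scope.

Ltac crunch := unfold dmul, dconj, qmul, qadd, qconj, done, qone, qzero, dj, qunit_j, dcbar, cconj, is_unit_dq, is_DC, is_complex in *; simpl in *.

Lemma mz (a x : R) : a <> 0 -> a * x = 0 -> x = 0.
Proof. intros Ha H. destruct (Rmult_integral _ _ H); [contradiction|assumption]. Qed.

Lemma set1 (a0 a1 a4 a5 : R) (p : dquat) : a1 <> 0 ->
  (is_unit_dq p /\ dmul (DQ (Quat a0 a1 0 0) (Quat a4 a5 0 0)) p = dmul p (DQ (Quat a0 a1 0 0) (Quat a4 a5 0 0)))
  <-> (is_DC p /\ is_unit_dq p).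
Proof.
  intro Ha. destruct p as [[c0 c1 c2 c3] [d0 d1 d2 d3]].
  split.
  - intros [HU E]. split; [|exact HU]. clear HU. crunch.
    injection E; intros.
    assert (X2: c2 = 0). { apply (mz (2*a1)); [lra|]. nra. }
    assert (X3: c3 = 0). { apply (mz (2*a1)); [lra|]. nra. }
    subst c2 c3.
    assert (X2: d2 = 0). { apply (mz (2*a1)); [lra|]. nra. }
    assert (X3: d3 = 0). { apply (mz (2*a1)); [lra|]. nra. }
    subst. auto.
  - intros [[[? ?] [? ?]] HU]. split; [exact HU|]. simpl in *; subst. crunch.
    f_equal; f_equal; ring.
Qed.
Lemma set2 (a0 a1 a4 a5 : R) (p : dquat) : a1 <> 0 ->
  (is_unit_dq p /\ dmul (DQ (Quat a0 a1 0 0) (Quat a4 a5 0 0)) p = dmul p (DQ (Quat a0 (-a1) 0 0) (Quat a4 (-a5) 0 0)))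
  <-> (exists r : dquat, is_DC r /\ is_unit_dq r /\ p = dmul r dj).
Proof.
  intro Ha. destruct p as [[c0 c1 c2 c3] [d0 d1 d2 d3]].
  split.
  - intros [HU E]. crunch. destruct HU as [U1 U2].
    injection E; intros.
    assert (X2: c0 = 0). { apply (mz (2*a1)); [lra|]. nra. }
    assert (X3: c1 = 0). { apply (mz (2*a1)); [lra|]. nra. }
    subst c0 c1.
    assert (X2: d0 = 0). { apply (mz (2*a1)); [lra|]. nra. }
    assert (X3: d1 = 0). { apply (mz (2*a1)); [lra|]. nra. }
    subst.
    exists (DQ (Quat c2 c3 0 0) (Quat d2 d3 0 0)). crunch.
    injection U1; injection U2; intros.
    split; [auto|split; [split|]].
    + f_equal; f_equal; nra.
    + f_equal; f_equal; nra.
    + f_equal; f_equal; ring.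
  - intros [[[r0 r1 r2 r3] [r4 r5 r6 r7]] [[[? ?] [? ?]] [[U1 U2] E]]].
    simpl in *; subst. crunch.
    injection U1; injection U2; injection E; intros; subst.
    crunch. split; [split|].
    + f_equal; f_equal; nra.
    + f_equal; f_equal; nra.
    + f_equal; f_equal; ring.
Qed.
Lemma mainlem (a0 a1 a4 a5 b0 b1 b4 b5 : R) (q : dquat) : a1 <> 0 ->
  is_unit_dq q ->
  dmul (dmul (dconj q) (DQ (Quat a0 a1 0 0) (Quat a4 a5 0 0))) q = DQ (Quat b0 b1 0 0) (Quat b4 b5 0 0) ->
  (b0 = a0 /\ b1 = a1 /\ b4 = a4 /\ b5 = a5) \/ (b0 = a0 /\ b1 = - a1 /\ b4 = a4 /\ b5 = - a5).
Proof.
  intros Ha [U1 U2] E. destruct q as [[s t u v] [e f g h]]. crunch.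
  injection U1; injection U2; injection E; intros.
  assert (P1 : s*u+t*v = 0). { apply (mz (2*a1)); [lra|]. nra. }
  assert (P2 : t*u-s*v = 0). { apply (mz (2*a1)); [lra|]. nra. }
  assert (P : (s*s+t*t)*(u*u+v*v) = 0). { transitivity ((s*u+t*v)^2 + (t*u-s*v)^2); [ring|]. rewrite P1, P2. ring. }
  destruct (Rmult_integral _ _ P) as [Z|Z].
  - assert (s = 0) by nra. assert (t = 0) by nra. subst s t. right.
    ring_simplify in H; ring_simplify in H0; ring_simplify in H1; ring_simplify in H2; ring_simplify in H5; ring_simplify in H6; ring_simplify in H18; ring_simplify in H22.
    assert (K1: a0*(u^2+v^2) = a0) by (rewrite H22; ring).
    assert (K2: a1*(u^2+v^2) = a1) by (rewrite H22; ring).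
    assert (K3: a4*(u^2+v^2) = a4) by (rewrite H22; ring).
    assert (K4: a5*(u^2+v^2) = a5) by (rewrite H22; ring).
    assert (K5: a0*(2 * u * g + 2 * v * h) = 0) by (rewrite H18; ring).
    assert (K6: a1*(2 * u * g + 2 * v * h) = 0) by (rewrite H18; ring).
    split; [lra|split; [lra|split; lra]].
  - assert (u = 0) by nra. assert (v = 0) by nra. subst u v. left.
    ring_simplify in H; ring_simplify in H0; ring_simplify in H1; ring_simplify in H2; ring_simplify in H5; ring_simplify in H6; ring_simplify in H18; ring_simplify in H22.
    assert (K1: a0*(s^2+t^2) = a0) by (rewrite H22; ring).
    assert (K2: a1*(s^2+t^2) = a1) by (rewrite H22; ring).
    assert (K3: a4*(s^2+t^2) = a4) by (rewrite H22; ring).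
    assert (K4: a5*(s^2+t^2) = a5) by (rewrite H22; ring).
    assert (K5: a0*(2 * s * e + 2 * t * f) = 0) by (rewrite H18; ring).
    assert (K6: a1*(2 * s * e + 2 * t * f) = 0) by (rewrite H18; ring).
    split; [lra|split; [lra|split; lra]].
Qed.

Theorem corollary3p1 (a b q : dquat) :
  is_DC a -> is_DC b ->
  qi (dst a) <> 0 -> qi (dst b) <> 0 ->
  is_unit_dq q ->
  dmul (dmul (dconj q) a) q = b ->
  (a = b /\
     forall p : dquat, (is_unit_dq p /\ dmul a p = dmul p b) <-> (is_DC p /\ is_unit_dq p))
  \/
  (a = dcbar b /\
     forall p : dquat, (is_unit_dq p /\ dmul a p = dmul p b) <->
       (exists r : dquat, is_DC r /\ is_unit_dq r /\ p = dmul r dj)).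
Proof.
  destruct a as [[a0 a1 a2 a3] [a4 a5 a6 a7]], b as [[b0 b1 b2 b3] [b4 b5 b6 b7]].
  intros [[Ha2 Ha3] [Ha6 Ha7]] [[Hb2 Hb3] [Hb6 Hb7]]; simpl in *; subst.
  intros Ha Hb HU E.
  destruct (mainlem a0 a1 a4 a5 b0 b1 b4 b5 q Ha HU E) as [[? [? [? ?]]]|[? [? [? ?]]]]; subst.
  - left. split; [reflexivity|]. intro p. apply set1; exact Ha.
  - right. split.
    + unfold dcbar, cconj; simpl. f_equal; f_equal; ring.
    + intro p. apply set2; exact Ha.
Qed.
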